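(* Let $G=(V,E)$ be a finite graph and $\psi:(0,+\infty)\to\mathbb R$ a $C^1$ concave function with $\psi'(1)=0$. Suppose a function $f:V\times(0,\infty)\to(0,\infty)$ satisfies $$\Gamma^\psi(f)\le\frac{D_1}{t}+D_2\quad\text{at all vertices and all }t>0$$ for some positive constants $D_1,D_2$. Then for all $x,y\in V$ and $t>0$, $$f(x,t)\le f(y,t)\exp\left\{d(x,y)\sqrt{\frac{H_\psi\mu_{\max}}{w_{\min}}}\sqrt{\frac{D_1}{t}+D_2}\right\}.$$
   Context: Graphs: $G=(V,E)$ is a connected, locally finite graph; each edge $xy$ carries a weight $w_{xy}>0$, and $\mu:V\to(0,\infty)$ is a vertex measure; $y\sim x$ means $xy\in E$; $d$ is the graph distance; $\mu_{\max}=\max_x\mu(x)$, $w_{\min}=\min_{xy\in E}w_{xy}$. Laplacian: $\Delta f(x)=\frac{1}{\mu(x)}\sum_{y\sim x}w_{xy}(f(y)-f(x))$. For $f:V\to(0,\infty)$: $\Delta^\psi f(x)=\Delta\big[\psi\big(\tfrac{f}{f(x)}\big)\big](x)$; $\overline\psi(s)=\psi'(1)(s-1)-(\psi(s)-\psi(1))$, $\Gamma^\psi f=\Delta^{\overline\psi}f$ (applied to $f(\cdot,t)$ at each time). Harnack constant: $H_\psi=\sup_{x>1}\frac{\log^2x}{\overline\psi(x)}$ (assumed finite). *)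

(* Defs.v *)
From HB Require Import structures.
From mathcomp Require Import all_boot all_order all_algebra.
From mathcomp Require Import all_classical all_reals all_analysis.
Set Implicit Arguments. Unset Strict Implicit. Unset Printing Implicit Defensive.
Import Order.TTheory GRing.Theory Num.Theory.
Local Open Scope classical_set_scope.
Local Open Scope ring_scope.

Section GraphDefs.
Variables (R : realType) (V : finType).

Definition walk_len (e : rel V) (x y : V) (n : nat) : Prop :=
  exists p : seq V, [/\ path e x p, last x p = y & size p = n].

(* graph distance: least length of a walk from x to y (0 if unreachable;
   irrelevant for connected graphs) *)
Definition gdist (e : rel V) (x y : V) : nat :=
  match pselect (exists n, `[< walk_len e x y n >]) with
  | left h => ex_minn h
  | right _ => 0%N
  end.

Definition glap (e : rel V) (w : V -> V -> R) (mu : V -> R) (g : V -> R) (x : V) : R :=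
  (mu x)^-1 * \sum_(y | e x y) w x y * (g y - g x).

Definition psibar (psi : R -> R) (s : R) : R :=
  derive1 psi 1 * (s - 1) - (psi s - psi 1).

Definition lap_phi (e : rel V) (w : V -> V -> R) (mu : V -> R) (phi : R -> R)
  (g : V -> R) (x : V) : R :=
  glap e w mu (fun y => phi (g y / g x)) x.

Definition Gamma_psi (e : rel V) (w : V -> V -> R) (mu : V -> R) (psi : R -> R)
  (g : V -> R) (x : V) : R :=
  lap_phi e w mu (psibar psi) g x.

Definition H_psi (psi : R -> R) : R :=
  sup [set ln s ^+ 2 / psibar psi s | s in `]1, +oo[%classic].

Definition mu_max (mu : V -> R) : R := sup (range mu).

Definition w_min (e : rel V) (w : V -> V -> R) : R :=
  inf [set w xy.1 xy.2 | xy in [set xy : V * V | e xy.1 xy.2]].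

End GraphDefs.

(* Main.v *)
Require Import Defs.
From HB Require Import structures.
From mathcomp Require Import all_boot all_order all_algebra.
From mathcomp Require Import all_classical all_reals all_analysis.
From mathcomp Require Import ring lra.
Import Order.TTheory GRing.Theory Num.Theory numFieldNormedType.Exports.
Local Open Scope classical_set_scope.
Local Open Scope ring_scope.

Lemma psi_le1 (R : realType) (psi : R -> R) :
  derivable psi 1 1 -> derive1 psi 1 = 0 ->
  (forall a b l, 0 < a -> 0 < b -> 0 <= l <= 1 ->
     l * psi a + (1 - l) * psi b <= psi (l * a + (1 - l) * b)) ->
  forall s, 0 < s -> s < 1 -> psi s <= psi 1.
Proof.
move=> hd hd0 hc s s0 s1.
rewrite leNgt; apply/negP => hlt.
have s1n : s - 1 < 0 by rewrite subr_lt0.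
set c := (psi s - psi 1) / (s - 1).
have cneg : c < 0 by rewrite /c pmulr_rlt0 ?subr_gt0 // invr_lt0.
have key : forall h, s - 1 <= h -> h < 0 -> h^-1 * (psi (h + 1) - psi 1) <= c.
  move=> h h1 h0; set l := h / (s - 1).
  have l0 : 0 <= l by rewrite /l ltW // nmulr_rgt0 // invr_lt0.
  have l1 : l <= 1 by rewrite /l ler_ndivrMr // mul1r.
  have := hc s 1 l s0 ltr01; rewrite l0 l1 => /(_ isT).
  have -> : l * s + (1 - l) * 1 = h + 1 by rewrite /l; field; rewrite subr_eq0 lt_eqF.
  move=> H.
  have : h^-1 * (psi (h + 1) - psi 1) <= h^-1 * (l * (psi s - psi 1)).
    apply: ler_wnM2l; first by rewrite invr_le0 ltW.
    lra.
  suff E : h^-1 * (l * (psi s - psi 1)) = c by rewrite E.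
  rewrite /l /c; field; rewrite subr_eq0 lt_eqF // (lt_eqF h0) //.
have hcv : (fun h => h^-1 *: ((psi \o shift 1) (h *: 1) - psi 1)) @ 0^' --> 0.
  rewrite -[X in _ --> X]hd0 derive1E; exact: hd.
move/cvgrPdist_lt/(_ (-c)) : hcv; rewrite oppr_gt0 => /(_ cneg).
rewrite near_withinE => /nbhs_ballP [d /= d0 hball].
set h := Num.max (s - 1) (- (d / 2)).
have hneg : h < 0 by rewrite /h gt_max s1n oppr_lt0 divr_gt0.
have hb : ball 0 d h.
  rewrite /ball /= sub0r normrN ltr0_norm // /h.
  have : - (d / 2) <= h by rewrite /h le_max lexx orbT.
  move=> H; rewrite ltrNl; apply: (lt_le_trans _ H); lra.
have := hball h hb (ltr0_neq0 hneg).
rewrite /= sub0r -[h%:A]/(h * 1) mulr1 -[h^-1 *: _]/(h^-1 * _) => /ltr_normlW.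
have := key h (ltac:(by rewrite /h le_max lexx)) hneg.
lra.
Qed.
Theorem mainTheorem14 (R : realType) (V : finType) (e : rel V)
  (w : V -> V -> R) (mu : V -> R) (psi : R -> R) (f : V -> R -> R) (D1 D2 : R) :
  (* finite connected simple graph with symmetric positive edge weights *)
  symmetric e -> irreflexive e -> (forall x y, connect e x y) ->
  (forall x y, w x y = w y x) -> (forall x y, e x y -> 0 < w x y) ->
  (forall x, 0 < mu x) ->
  (* psi is C^1 and concave on (0, +oo), with psi'(1) = 0 *)
  (forall s, 0 < s -> derivable psi s 1) ->
  (forall s : R, 0 < s -> {for s, continuous (derive1 psi : R -> R)}) ->
  (forall a b l, 0 < a -> 0 < b -> 0 <= l <= 1 ->
     l * psi a + (1 - l) * psi b <= psi (l * a + (1 - l) * b)) ->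
  derive1 psi 1 = 0 ->
  (* H_psi is finite *)
  (forall s, 1 < s -> 0 < psibar psi s) ->
  has_ubound [set ln s ^+ 2 / psibar psi s | s in `]1, +oo[%classic] ->
  (* f positive and the gradient estimate *)
  0 < D1 -> 0 < D2 ->
  (forall x t, 0 < t -> 0 < f x t) ->
  (forall x t, 0 < t -> Gamma_psi e w mu psi (fun y => f y t) x <= D1 / t + D2) ->
  forall x y t, 0 < t ->
    f x t <= f y t * expR ((gdist e x y)%:R
                 * Num.sqrt (H_psi psi * mu_max mu / w_min e w)
                 * Num.sqrt (D1 / t + D2)).
Proof.
move=> esym eirr econn wsym wpos mupos hder hcont hconc hd0 hpb hub D1p D2p fpos hG x y t t0.
have hd1 : derivable psi 1 1 := hder 1 ltr01.
have pb1 : psibar psi 1 = 0 by rewrite /psibar !subrr mulr0 subr0.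
have pbge0 : forall s, 0 < s -> 0 <= psibar psi s.
  move=> s s0; rewrite /psibar hd0 mul0r sub0r oppr_ge0 subr_le0.
  case: (ltgtP s 1) => [s1|s1|->]; [exact: psi_le1 | | done].
  by have := hpb s s1; rewrite /psibar hd0 mul0r sub0r oppr_gt0 subr_lt0 => /ltW.
set S := [set ln s ^+ 2 / psibar psi s | s in `]1, +oo[%classic].
have Ssup : has_sup S.
  split=> //; exists (ln 2 ^+ 2 / psibar psi 2); exists 2 => //.
  by rewrite /= in_itv /= andbT; lra.
have HS : forall s, 1 < s -> ln s ^+ 2 / psibar psi s <= H_psi psi.
  move=> s s1; apply: sup_upper_bound => //; exists s => //.
  by rewrite /= in_itv /= andbT.
have H0 : 0 <= H_psi psi.
  apply: le_trans (HS 2 _); last by lra.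
  by apply: divr_ge0; [exact: sqr_ge0 | apply: ltW; apply: hpb; lra].
have mumax : forall z, mu z <= mu_max mu.
  move=> z; apply: sup_upper_bound; last by exists z.
  split; first by exists (mu z), z.
  exists (\sum_v mu v) => _ [v _ <-]; rewrite (bigD1 v) //= lerDl.
  by apply: sumr_ge0 => u _; exact: ltW.
set m := \big[Num.min/1]_(p : V * V | e p.1 p.2) w p.1 p.2.
have m0 : 0 < m.
  by apply: (big_ind (fun r : R => 0 < r)) => //[a b ha hb|p hp]; [rewrite lt_min ha hb | exact: wpos].
have mle : forall p : V * V, e p.1 p.2 -> m <= w p.1 p.2.
  by move=> p hp; rewrite /m (bigD1 p) //= ge_min lexx.
have wmin : forall a b, e a b -> 0 < w_min e w /\ w_min e w <= w a b.
  move=> a b hab; split.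
  - apply: (lt_le_trans m0); apply: lb_le_inf; first by exists (w a b), (a, b).
    by move=> _ [p hp <-]; exact: mle.
  - apply: ge_inf; last by exists (a, b).
    by exists 0 => _ [p hp <-]; exact: ltW (wpos _ _ hp).
set A := H_psi psi * mu_max mu / w_min e w.
set B := D1 / t + D2.
set C := Num.sqrt A * Num.sqrt B.
have C0 : 0 <= C by rewrite mulr_ge0 ?sqrtr_ge0.
have B0 : 0 < B by rewrite /B addr_gt0 ?divr_gt0.
have edge : forall a z, e a z -> f a t <= f z t * expR C.
  move=> a z haz; have hza : e z a by rewrite esym.
  have fa := fpos a t t0; have fz := fpos z t t0.
  set s := f a t / f z t.
  have s0 : 0 < s by rewrite divr_gt0.
  have fas : f a t = f z t * s by rewrite /s mulrC divfK // gt_eqF.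
  rewrite fas ler_pM2l //.
  case: (leP s 1) => s1.
    by apply: (le_trans s1); rewrite -expR0 ler_expR.
  have hGz := hG z t t0.
  have low : (mu z)^-1 * (w z a * psibar psi s)
      <= Gamma_psi e w mu psi (fun y => f y t) z.
    rewrite /Gamma_psi /lap_phi /glap ler_pM2l ?invr_gt0 //.
    rewrite (bigD1 a) //= divff ?gt_eqF // pb1 subr0 lerDl.
    apply: sumr_ge0 => v /andP[hv _]; rewrite subr0.
    apply: mulr_ge0; [exact: ltW (wpos _ _ hv) | apply: pbge0; by apply: divr_gt0; apply: fpos].
  have wz := wpos z a hza; have muz := mupos z.
  have [wm0 wmle] := wmin z a hza.
  have key : psibar psi s <= mu z / w z a * B.
    have h := le_trans low hGz.
    rewrite ler_pdivrMl // in h.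
    by rewrite mulrAC ler_pdivlMr // mulrC.
  have hln : ln s ^+ 2 <= A * B.
    have := HS s s1; rewrite ler_pdivrMr ?hpb // => h1.
    apply: (le_trans h1); rewrite /A.
    apply: le_trans (ler_wpM2l H0 key) _.
    rewrite -!mulrA ler_wpM2l // !mulrA ler_wpM2r ?(ltW B0) //.
    apply: ler_pM => //; first exact: ltW.
      by rewrite invr_ge0 ltW.
    by rewrite lef_pV2 ?posrE.
  have lnC : ln s <= C.
    rewrite /C -sqrtrM; last by rewrite /A divr_ge0 ?mulr_ge0 ?(ltW wm0) //; exact: le_trans (ltW muz) (mumax z).
    rewrite -(ger0_norm (ln_ge0 (ltW s1))) -sqrtr_sqr; exact: ler_wsqrtr.
  by rewrite -(lnK s0) ?ler_expR.
have walk : forall p a, path e a p -> f a t <= f (last a p) t * expR ((size p)%:R * C).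
  elim=> [|z p IH] a /=; first by rewrite mul0r expR0 mulr1.
  move=> /andP[haz hp]; apply: (le_trans (edge a z haz)).
  rewrite -[(size p).+1]addn1 natrD mulrDl mul1r expRD mulrA ler_pM2r ?expR_gt0 //.
  exact: IH.
rewrite -mulrA -/C /gdist; case: pselect => [hex|hn]; last first.
  exfalso; apply: hn; case/connectP: (econn x y) => p hp ->.
  by exists (size p); apply/asboolP; exists p.
case: ex_minnP => n /asboolP [p [hp hl hs]] _.
by rewrite -hl -hs; exact: walk.
Qed.
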